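(* For every graph $G$ of order $n$, $\gamma_{rdR}(G)\le n+\gamma(G)$. This bound is sharp: for every graph $H$ with no isolated vertices, the graph $H'$ obtained from $H$ by attaching two new pendant vertices to each vertex of $H$ satisfies $\gamma_{rdR}(H')=|V(H')|+\gamma(H')$.
   Context: All graphs are finite and simple. An RDRD function of $G$ is a function $f:V(G)\to\{0,1,2,3\}$ such that every vertex with value $0$ has at least two neighbors with value $2$ or at least one neighbor with value $3$, every vertex with value $1$ has a neighbor with value $2$ or $3$, and the subgraph induced by the vertices with value $0$ has no isolated vertices; $\gamma_{rdR}(G)$ is the minimum of $\sum_v f(v)$ over RDRD functions. $\gamma(G)$ denotes the domination number. *)

(* Defs.v *)
From mathcomp Require Import all_boot.
Set Implicit Arguments. Unset Strict Implicit. Unset Printing Implicit Defensive.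

(* A finite simple graph: vertex type T : finType with adjacency e : rel T,
   assumed symmetric and irreflexive (hypotheses in the theorem). *)

Section Graph.
Variables (T : finType) (e : rel T).

Definition dominating (D : {set T}) : bool :=
  [forall v, (v \in D) || [exists u, e v u && (u \in D)]].

(* domination number gamma(G); setT always dominates so the default is harmless *)
Definition gamma : nat :=
  \big[minn/#|T|]_(D : {set T} | dominating D) #|D|.

Definition is_RDRD (f : {ffun T -> 'I_4}) : bool :=
  [forall v,
    ((nat_of_ord (f v) == 0) ==>
       ((1 < #|[set u | e v u && (nat_of_ord (f u) == 2)]|)
        || [exists u, e v u && (nat_of_ord (f u) == 3)]))
    && ((nat_of_ord (f v) == 1) ==> [exists u, e v u && (2 <= f u)])
    && ((nat_of_ord (f v) == 0) ==> [exists u, e v u && (nat_of_ord (f u) == 0)])].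

Definition weight (f : {ffun T -> 'I_4}) : nat := \sum_(v : T) nat_of_ord (f v).

(* gamma_rdR(G); the constant-3 function is always RDRD, so the default 3n is harmless *)
Definition gamma_rdR : nat :=
  \big[minn/(3 * #|T|)]_(f : {ffun T -> 'I_4} | is_RDRD f) weight f.

End Graph.

Definition pendant2 (T : finType) (e : rel T) : rel (T + (T * bool))%type :=
  fun a b =>
    match a, b with
    | inl x, inl y => e x y
    | inl x, inr (y, _) => x == y
    | inr (x, _), inl y => x == y
    | inr _, inr _ => false
    end.

(* Main.v *)
Require Import Defs.
From mathcomp Require Import all_boot.
From mathcomp Require Import zify.

Lemma bigmin_le_seq (I : eqType) (r : seq I) (P : pred I) F d i :
  i \in r -> P i -> \big[minn/d]_(j <- r | P j) F j <= F i.
Proof.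
elim: r => [|a r IH] //= ir Pi; rewrite big_cons.
move: ir; rewrite inE => /orP [/eqP <- | ir].
- by rewrite Pi geq_minl.
- case: (P a); last exact: IH.
  by apply: leq_trans (geq_minr _ _) (IH ir Pi).
Qed.

Lemma bigmin_le (I : finType) (P : pred I) F d i :
  P i -> \big[minn/d]_(j | P j) F j <= F i.
Proof. by move=> Pi; apply: bigmin_le_seq => //; rewrite mem_index_enum. Qed.

Lemma part1 (T : finType) (e : rel T) (D : {set T}) :
  dominating e D -> gamma_rdR e <= #|T| + #|D|.
Proof.
move=> /forallP domD.
pose f : {ffun T -> 'I_4} :=
  [ffun v => if v \in D then (@Ordinal 4 2 isT) else (@Ordinal 4 1 isT)].
have fR : is_RDRD e f.
  apply/forallP => v; rewrite /f ffunE.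
  case: ifP => vD /=; first by [].
  have := domD v; rewrite vD /= => /existsP [u /andP [evu uD]].
  by rewrite ?andbT; apply/existsP; exists u; rewrite evu ffunE uD.
have wf : weight f = #|T| + #|D|.
  rewrite /weight.
  rewrite (eq_bigr (fun v => 1 + (if v \in D then 1 else 0))); last first.
    by move=> v _; rewrite ffunE; case: (v \in D).
  by rewrite big_split /= sum1_card -big_mkcond /= sum1_card.
by rewrite -wf /gamma_rdR; apply: bigmin_le.
Qed.

Lemma part1' (T : finType) (e : rel T) : gamma_rdR e <= #|T| + gamma e.
Proof.
rewrite /gamma; apply: (big_ind (fun x => gamma_rdR e <= #|T| + x)).
- have := @part1 T e setT; rewrite cardsT; apply.
  by apply/forallP => v; rewrite in_setT.
- by move=> x y hx hy; rewrite /minn; case: ifP.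
- by move=> D; apply: part1.
Qed.

Section Pend.
Variables (T : finType) (e : rel T).

Lemma pend_nb x b u : pendant2 e (inr (x, b)) u -> u = inl x.
Proof. by case: u => [y | [y c]] //= /eqP ->. Qed.
Arguments pend_nb {x b u}.

Lemma pend_bound (f : {ffun (T + (T * bool))%type -> 'I_4}) x b :
  is_RDRD (pendant2 e) f ->
  1 <= f (inr (x, b)) /\ (nat_of_ord (f (inr (x, b))) = 1 -> 2 <= f (inl x)).
Proof.
move=> /forallP /(_ (inr (x, b))) /andP [/andP [h0 h1] h2].
split.
- rewrite lt0n; apply/negP => /eqP z.
  move: h0 h2; rewrite z /= => /orP h0 /existsP [u /andP [nu /eqP fu]].
  have Eu := pend_nb (b:=b) nu; subst u.
  case: h0 => [hc | /existsP [w /andP [nw /eqP fw]]].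
  + have : #|[set u | pendant2 e (inr (x, b)) u && (nat_of_ord (f u) == 2)]| <= 1.
      apply: (@leq_trans #|[set (inl x : (T + (T * bool))%type)]|); last by rewrite cards1.
      apply: subset_leq_card.
      apply/subsetP => w; rewrite !inE => /andP [nw _].
      by rewrite (pend_nb (b:=b) nw).
    by rewrite leqNgt hc.
  + have Ew := pend_nb (b:=b) nw; subst w; move: fw fu => /= fw fu; congruence.
- move=> o; move: h1; rewrite o /= => /existsP [u /andP [nu fu]].
  by rewrite (pend_nb (b:=b) nu) in fu.
Qed.

Lemma group4 (f : {ffun (T + (T * bool))%type -> 'I_4}) x :
  is_RDRD (pendant2 e) f ->
  4 <= f (inl x) + f (inr (x, false)) + f (inr (x, true)).
Proof.
move=> fR.
have [a1 a2] := pend_bound f x false fR.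
have [b1 b2] := pend_bound f x true fR.
move: a1 a2 b1 b2.
case: (f (inl x)) => [p ?]; case: (f (inr (x, false))) => [q ?];
case: (f (inr (x, true))) => [r ?] /=; lia.
Qed.

Lemma lower (f : {ffun (T + (T * bool))%type -> 'I_4}) :
  is_RDRD (pendant2 e) f -> 4 * #|T| <= weight f.
Proof.
move=> fR; rewrite /weight big_sumType /=.
have -> : \sum_(p : T * bool) nat_of_ord (f (inr p)) =
   \sum_(x : T) \sum_(b : bool) nat_of_ord (f (inr (x, b))).
  by rewrite pair_big /=; apply: eq_bigr => -[x b] _.
rewrite -big_split /=.
rewrite -sum1_card big_distrr /=.
apply: leq_sum => x _.
rewrite big_bool /= muln1.
by rewrite addnA addnAC (group4 f x fR).
Qed.

Lemma gamma_le : gamma (pendant2 e) <= #|T|.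
Proof.
pose D : {set (T + (T * bool))%type} := [set inl x | x in T].
have dD : dominating (pendant2 e) D.
  apply/forallP => v; case: v => [y | [y c]].
  - by rewrite /D; apply/orP; left; apply/imsetP; exists y.
  - apply/orP; right; apply/existsP; exists (inl y).
    by rewrite /= eqxx /D; apply/imsetP; exists y.
have cD : #|D| = #|T|.
  by rewrite /D card_imset //; move=> a c [].
by rewrite -cD /gamma; apply: bigmin_le.
Qed.

End Pend.

Theorem proposition2p5 :
  (forall (T : finType) (e : rel T), symmetric e -> irreflexive e ->
     gamma_rdR e <= #|T| + gamma e)
  /\
  (forall (T : finType) (e : rel T), symmetric e -> irreflexive e ->
     (forall x : T, exists y, e x y) ->
     gamma_rdR (pendant2 e) = #|((T + (T * bool))%type : finType)| + gamma (pendant2 e)).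
Proof.
split; first by move=> T e _ _; apply: part1'.
move=> T e _ _ _.
have up := @part1' _ (pendant2 e).
have gl := @gamma_le T e.
have lo : 4 * #|T| <= gamma_rdR (pendant2 e).
  rewrite /gamma_rdR; apply: (big_ind (fun x => 4 * #|T| <= x)).
  - rewrite card_sum card_prod card_bool; lia.
  - move=> x y hx hy; rewrite leq_min hx hy //.
  - by move=> f; apply: lower.
move: up lo; rewrite card_sum card_prod card_bool; lia.
Qed.
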